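(* Dynamic A* (with \texttt{reeval} either true or false) using a dyn-admissible dynamic heuristic returns optimal solutions: whenever it returns a path, that path is a solution of $\mathcal T$ of cost $h^*(s_I)$ (i.e., of minimal cost among all solutions).
   Context: A transition system is $\mathcal T=\langle S,L,c,T,s_I,S_G\rangle$ with finite states $S$, finite labels $L$, cost function $c:L\to\mathbb R_{\ge0}$, transitions $T\subseteq S\times L\times S$, initial state $s_I$, goal states $S_G\subseteq S$. Paths, costs, solutions (paths from $s_I$ to a goal state) are as usual; $h^*(s)$ is the minimal cost of a path from $s$ to a goal ($\infty$ if none). An information source $\sigma$ consists of a set $\mathcal I_\sigma$, $\iota_0^\sigma\in\mathcal I_\sigma$, $\mathrm{update}_\sigma:\mathcal I_\sigma\times T\to\mathcal I_\sigma$, $\mathrm{refine}_\sigma:\mathcal I_\sigma\times S\to\mathcal I_\sigma$. Reachable information: $\iota_n$ is reachable if obtained from $\iota_0^\sigma$ by a sequence of refine steps on states and update steps on transitions $e_1,\dots,e_n$, where each refined state and each origin of an updated transition is $s_I$ or the target of an earlier updated transition. A dynamic heuristic over $\sigma$ is $h:S\times\mathcal I_\sigma\to\mathbb R_{\ge0}\cup\{\infty\}$; it is dyn-admissible if $h(s,\iota)\le h^*(s)$ for all $s$ and all reachable $\iota$. Parent source $\sigma_p$: $\mathcal I_{\sigma_p}$ = partial functions $S\rightharpoonup\mathbb R_{\ge0}\times(T\cup\{\bot\})$; $\iota_0=\{s_I\mapsto\langle0,\bot\rangle\}$; refine is the identity; $\mathrm{update}(\iota,\langle s,\ell,s'\rangle)$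 with $\iota(s)=\langle g,\cdot\rangle$ changes only $s'$, setting it to $\langle g+c(\ell),\langle s,\ell,s'\rangle\rangle$ if $\iota(s')$ is undefined or has $g$-component $\ge g+c(\ell)$, otherwise unchanged. Dynamic A* takes $\mathcal T$, sources $\sigma_p,\sigma_h$, a dynamic heuristic $h$ over $\sigma_h$ and a Boolean flag \texttt{reeval}. Notation: at any moment $g(s)$ is the $g$-component of the current $\mathcal I(\sigma_p)(s)$ and $h(s)$ denotes $h(s,\mathcal I(\sigma_h))$ for the current $\mathcal I(\sigma_h)$. Open is a priority queue of entries $\langle s,g,h\rangle$ (duplicates allowed), popped by minimal stored value $g+h$ (ties arbitrary). Algorithm: 1. $\mathcal I(\sigma):=\iota_0^\sigma$ for both sources; $S_{\mathrm{known}}:=\{s_I\}$; Closed $:=\emptyset$; Open empty. If $h(s_I)<\infty$ insert $\langle s_I,g(s_I),h(s_I)\rangle$. 2. While Open is nonempty: pop an entry $\langle s,\hat g,\hat h\rangle$ of minimal $\hat g+\hat h$. If $s\in$ Closed, continue with the next iteration. Otherwise set $\mathcal I(\sigma):=\mathrm{refine}_\sigma(\mathcal I(\sigma),s)$ for both sources. If \texttt{reeval} is true and $\hat h<h(s)$: if $h(s)<\infty$ insert $\langle s,g(s),h(s)\rangle$; continue with the next iteration (this is a re-evaluation). Otherwise add $s$ to Closed ($s$ is expanded). If $s\in S_G$, return the path obtained by following the parent pointers of $\mathcal I(\sigma_p)$ from $s$ back to $s_I$. Otherwise, for each $t=\langle s,\ell,s'\rangle\in T$ in some order: let $old:=g(s')$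 if $s'\in S_{\mathrm{known}}$ and undefined otherwise; set $\mathcal I(\sigma):=\mathrm{update}_\sigma(\mathcal I(\sigma),t)$ for both sources; add $s'$ to $S_{\mathrm{known}}$; if $h(s')=\infty$ skip $s'$; else if $old$ is undefined insert $\langle s',g(s'),h(s')\rangle$; else if $old>g(s')$, remove $s'$ from Closed if it is there (reopening) and insert $\langle s',g(s'),h(s')\rangle$. 3. Return ''unsolvable''. *)

(* Defs.v *)
From HB Require Import structures.
From mathcomp Require Import all_boot all_order all_algebra.
From mathcomp Require Import all_classical all_reals ereal.
Set Implicit Arguments. Unset Strict Implicit. Unset Printing Implicit Defensive.
Import Order.TTheory GRing.Theory Num.Theory.
Local Open Scope ring_scope.

(* A transition <s, l, s'> is a triple ((s, l), s') : S * L * S;           *)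
(* source t = t.1.1, label t = t.1.2, target t = t.2.                      *)

Section TS.
Variables (R : realType) (S L : finType) (c : L -> R) (T : {set S * L * S}).

Fixpoint chain (s : S) (pi : seq (S * L * S)) (s' : S) : Prop :=
  match pi with
  | [::] => s = s'
  | t :: pi' => t.1.1 = s /\ chain t.2 pi' s'
  end.

Definition is_path (s : S) (pi : seq (S * L * S)) (s' : S) : Prop :=
  chain s pi s' /\ (forall t, t \in pi -> t \in T).

Definition cost (pi : seq (S * L * S)) : R := \sum_(t <- pi) c t.1.2.

Definition goal_path (SG : {set S}) (s : S) (pi : seq (S * L * S)) : Prop :=
  exists s', s' \in SG /\ is_path s pi s'.

Definition is_solution (sI : S) (SG : {set S}) (pi : seq (S * L * S)) : Prop :=
  goal_path SG sI pi.

(* h^*(s): infimum (= minimum) of the costs of goal paths from s; +oo if none *)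
Definition hstar (SG : {set S}) (s : S) : \bar R :=
  ereal_inf [set (cost pi)%:E | pi in [set pi | goal_path SG s pi]].
End TS.

Record source (S L : Type) := Source {
  info : Type;
  iota0 : info;
  update : info -> S * L * S -> info;
  refine : info -> S -> info }.

Section Reach.
Variables (S L : finType) (T : {set S * L * S}) (sI : S) (sg : source S L).

(* reach_info iota K : iota is obtained from iota0 by refine/update steps;
   K lists s_I and the targets of the updated transitions so far.          *)
Inductive reach_info : info sg -> seq S -> Prop :=
| reach0 : reach_info (iota0 sg) [:: sI]
| reach_refine i K s : reach_info i K -> s \in K -> reach_info (refine i s) K
| reach_update i K t : reach_info i K -> t \in T -> t.1.1 \in K ->
    reach_info (update i t) (t.2 :: K).

Definition reachable (i : info sg) : Prop := exists K, reach_info i K.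
End Reach.

Definition dyn_admissible (R : realType) (S L : finType) (c : L -> R)
  (T : {set S * L * S}) (sI : S) (SG : {set S}) (sg : source S L)
  (h : S -> info sg -> \bar R) : Prop :=
  forall s i, reachable T sI i -> (h s i <= hstar c T SG s)%E.

(* partial functions S -> R>=0 * (T u {bot}); None = undefined,            *)
(* inner None = bot.                                                       *)
Section Parent.
Variables (R : realType) (S L : finType) (c : L -> R) (sI : S).

Definition pinfo := S -> option (R * option (S * L * S)).

Definition pinfo0 : pinfo :=
  fun s => if s == sI then Some (0, None) else None.

(* update(iota, <s,l,s'>): only defined (i.e. non-identity) when iota(s) is
   defined; then it changes only s'. *)
Definition pupdate (i : pinfo) (t : S * L * S) : pinfo :=
  match i t.1.1 with
  | None => i
  | Some (g, _) =>
      let g' := g + c t.1.2 in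
      let set := fun x => if x == t.2 then Some (g', Some t) else i x in
      match i t.2 with
      | None => set
      | Some (g0, _) => if g' <= g0 then set else i
      end
  end.

Definition prefine (i : pinfo) (_ : S) : pinfo := i.

Definition parent_source : source S L := Source pinfo0 pupdate prefine.

(* g-component (only used where defined) *)
Definition gval (i : pinfo) (s : S) : R :=
  if i s is Some (g, _) then g else 0.

(* pi is the path obtained by following the parent pointers of i from s
   back to s_I (stopping at the first occurrence of s_I) *)
Definition parent_chain (i : pinfo) (s : S) (pi : seq (S * L * S)) : Prop :=
  chain sI pi s /\
  (forall t, t \in pi -> exists g, i t.2 = Some (g, Some t)) /\
  (forall t, t \in pi -> t.2 != sI).
End Parent.

Section DynAstar.
Variables (R : realType) (S L : finType) (c : L -> R) (T : {set S * L * S})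
  (sI : S) (SG : {set S}) (sh : source S L) (h : S -> info sh -> \bar R)
  (reeval : bool).

Local Notation sp := (parent_source c sI).

(* Open-list entries <s, g, h> *)
Definition entry := (S * R * \bar R)%type.
Definition key (e : entry) : \bar R := (e.1.2%:E + e.2)%E.

Record cfg := Cfg {
  c_ip : pinfo R S L;
  c_ih : info sh;
  c_known : {set S};
  c_closed : {set S};
  c_open : seq entry }.

Definition init_cfg : cfg :=
  let hI := h sI (iota0 sh) in
  Cfg (iota0 sp) (iota0 sh) [set sI] (finset.set0 : {set S})
      (if (hI < +oo)%E then [:: (sI, gval (iota0 sp) sI, hI)] else [::]).

Definition process (st : cfg) (t : S * L * S) : cfg :=
  let s' := t.2 in
  let old := if s' \in c_known st then Some (gval (c_ip st) s') else None in
  let ip' := @update S L sp (c_ip st) t in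
  let ih' := update (c_ih st) t in
  let known' := s' |: c_known st in
  let g' := gval ip' s' in
  let hv := h s' ih' in
  if hv == +oo%E then Cfg ip' ih' known' (c_closed st) (c_open st)
  else match old with
       | None => Cfg ip' ih' known' (c_closed st) ((s', g', hv) :: c_open st)
       | Some o =>
           if g' < o
           then Cfg ip' ih' known' (c_closed st :\ s') ((s', g', hv) :: c_open st)
           else Cfg ip' ih' known' (c_closed st) (c_open st)
       end.

Definition succ_transitions (s : S) : seq (S * L * S) :=
  enum [pred t : S * L * S | (t \in T) && (t.1.1 == s)].

Inductive outcome :=
| Cont of cfg
| Ret of seq (S * L * S)
| Unsolvable.

(* one iteration of the while loop (or the final "unsolvable"); the choice
   of the popped minimal entry and of the order of successors is
   nondeterministic *)
Inductive step : cfg -> outcome -> Prop :=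
| step_empty st : c_open st = [::] -> step st Unsolvable
| step_closed st e :
    e \in c_open st -> (forall e', e' \in c_open st -> (key e <= key e')%E) ->
    e.1.1 \in c_closed st ->
    step st (Cont (Cfg (c_ip st) (c_ih st) (c_known st) (c_closed st)
                       (rem e (c_open st))))
| step_reeval st e :
    e \in c_open st -> (forall e', e' \in c_open st -> (key e <= key e')%E) ->
    e.1.1 \notin c_closed st ->
    let s := e.1.1 in
    let ip' := @refine S L sp (c_ip st) s in
    let ih' := refine (c_ih st) s in
    reeval -> (e.2 < h s ih')%E ->
    step st (Cont (Cfg ip' ih' (c_known st) (c_closed st)
                  (if (h s ih' < +oo)%E
                   then (s, gval ip' s, h s ih') :: rem e (c_open st)
                   else rem e (c_open st))))
| step_return st e pi :
    e \in c_open st -> (forall e', e' \in c_open st -> (key e <= key e')%E) ->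
    e.1.1 \notin c_closed st ->
    let s := e.1.1 in
    let ip' := @refine S L sp (c_ip st) s in
    let ih' := refine (c_ih st) s in
    ~~ (reeval && (e.2 < h s ih')%E) ->
    s \in SG -> parent_chain sI ip' s pi ->
    step st (Ret pi)
| step_expand st e ts :
    e \in c_open st -> (forall e', e' \in c_open st -> (key e <= key e')%E) ->
    e.1.1 \notin c_closed st ->
    let s := e.1.1 in
    let ip' := @refine S L sp (c_ip st) s in
    let ih' := refine (c_ih st) s in
    ~~ (reeval && (e.2 < h s ih')%E) ->
    s \notin SG -> perm_eq ts (succ_transitions s) ->
    step st (Cont (foldl process
                    (Cfg ip' ih' (c_known st) (s |: c_closed st)
                         (rem e (c_open st))) ts)).

Inductive returns : cfg -> seq (S * L * S) -> Prop :=
| returns_now st pi : step st (Ret pi) -> returns st pi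
| returns_later st st' pi : step st (Cont st') -> returns st' pi -> returns st pi.

Definition dynAstar_returns (pi : seq (S * L * S)) : Prop :=
  returns init_cfg pi.
End DynAstar.

(* Main.v *)
Require Import Defs.
From HB Require Import structures.
From mathcomp Require Import all_boot all_order all_algebra.
From mathcomp Require Import all_classical all_reals ereal.
Import Order.TTheory GRing.Theory Num.Theory.
Local Open Scope ring_scope.
Set Implicit Arguments. Unset Strict Implicit. Unset Printing Implicit Defensive.

Section Proofs.
Variables (R : realType) (S L : finType) (c : L -> R) (T : {set S * L * S})
  (sI : S) (SG : {set S}) (sh : source S L) (h : S -> info sh -> \bar R)
  (reeval : bool).
Hypothesis c_ge0 : forall l, 0 <= c l.
Hypothesis h_ge0 : forall s i, (0 <= h s i)%E.
Hypothesis adm : dyn_admissible c T sI SG h.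

Local Notation hs := (hstar c T SG).
Local Notation pinf := (pinfo R S L).

Lemma hstar_le s p : goal_path T SG s p -> (hs s <= (cost c p)%:E)%E.
Proof. by move=> gp; apply: ereal_inf_lbound; exists p. Qed.

Lemma le_hstar s (x : \bar R) :
  (forall p, goal_path T SG s p -> (x <= (cost c p)%:E)%E) -> (x <= hs s)%E.
Proof. by move=> H; apply: le_ereal_inf_tmp => _ [p gp <-]; exact: H. Qed.

Lemma hstar_fin s p : goal_path T SG s p -> (hs s < +oo)%E.
Proof. by move=> /hstar_le H; apply: (le_lt_trans H); rewrite ltry. Qed.

Lemma cost_cons (t : S * L * S) p : cost c (t :: p) = c t.1.2 + cost c p.
Proof. by rewrite /cost big_cons. Qed.

Lemma cost_cat (p q : seq (S * L * S)) : cost c (p ++ q) = cost c p + cost c q.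
Proof. by rewrite /cost big_cat. Qed.

Lemma cost_rcons p (t : S * L * S) : cost c (rcons p t) = cost c p + c t.1.2.
Proof. by rewrite -cats1 cost_cat cost_cons /cost big_nil addr0. Qed.

Lemma pupdate_other (i : pinf) t x : x != t.2 -> pupdate c i t x = i x.
Proof.
move=> nx; rewrite /pupdate; case: (i t.1.1) => [[g _]|] //.
case: (i t.2) => [[g0 _]|]; last by rewrite (negbTE nx).
by case: ifP => // _; rewrite (negbTE nx).
Qed.

Lemma pupdate_some (i : pinf) t x g p : i x = Some (g, p) ->
  exists g' p', pupdate c i t x = Some (g', p') /\ g' <= g.
Proof.
move=> ix; move: ix; case: (eqVneq x t.2) => [->|nx] ix; last first.
  by exists g, p; rewrite pupdate_other // lexx.
rewrite /pupdate ix; case: (i t.1.1) => [[g1 _]|]; last by exists g, p; rewrite ix lexx.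
case: ifP => [le|_]; last by exists g, p; rewrite ix lexx.
by exists (g1 + c t.1.2), (Some t); rewrite eqxx.
Qed.

Lemma pupdate_src (i : pinf) t g p : i t.1.1 = Some (g, p) ->
  exists g' p', pupdate c i t t.2 = Some (g', p') /\ g' <= g + c t.1.2.
Proof.
move=> it; rewrite /pupdate it; case E: (i t.2) => [[g0 p0]|].
  case: ifP => [le|lt]; first by exists (g + c t.1.2), (Some t); rewrite eqxx.
  exists g0, p0; split => //.
  by move/negbT: lt; rewrite -ltNge => /ltW.
by exists (g + c t.1.2), (Some t); rewrite eqxx.
Qed.

Lemma pupdate_none (i : pinf) t : i t.1.1 = None -> pupdate c i t = i.
Proof. by rewrite /pupdate => ->. Qed.

Lemma pupdate_shape (i : pinf) t x g p : pupdate c i t x = Some (g, p) ->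
  i x = Some (g, p) \/ (x = t.2 /\ p = Some t /\
     exists g1 p1, i t.1.1 = Some (g1, p1) /\ g = g1 + c t.1.2).
Proof.
rewrite /pupdate; case E1: (i t.1.1) => [[g1 p1]|]; last by left.
have setE : (fun y => if y == t.2 then Some (g1 + c t.1.2, Some t) else i y) x
   = Some (g, p) -> i x = Some (g, p) \/ (x = t.2 /\ p = Some t /\
     exists g1' p1', Some (g1, p1) = Some (g1', p1') /\ g = g1' + c t.1.2).
  case: eqP => [-> [<- <-]|_]; last by left.
  by right; split => //; split => //; exists g1, p1.
case: (i t.2) => [[g0 _]|]; last by move/setE; rewrite -E1.
by case: ifP => _; [move/setE; rewrite -E1|left].
Qed.

Local Notation cfgT := (cfg R sh).

Lemma process_spec (st : cfgT) (t : S * L * S) :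
  let ip' := pupdate c (c_ip st) t in
  let ih' := update (c_ih st) t in
  let known' := t.2 |: c_known st in
  let hv := h t.2 ih' in
  let g' := gval ip' t.2 in
  let o := gval (c_ip st) t.2 in
  [\/ process c sI h st t = Cfg ip' ih' known' (c_closed st) (c_open st) /\
        (hv = +oo%E \/ (t.2 \in c_known st /\ ~~ (g' < o))),
      process c sI h st t = Cfg ip' ih' known' (c_closed st) ((t.2, g', hv) :: c_open st) /\
        (hv != +oo%E /\ t.2 \notin c_known st) |
      process c sI h st t = Cfg ip' ih' known' (c_closed st :\ t.2) ((t.2, g', hv) :: c_open st) /\
        [/\ hv != +oo%E, t.2 \in c_known st & g' < o]].
Proof.
rewrite /process /=.
case: eqP => [hoo|/eqP hnoo]; first by constructor 1; split => //; left.
case: ifP => kn.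
  case: ifP => lt; last by constructor 1; split => //; right; split => //; exact: negbT lt.
  by constructor 3.
by constructor 2; split => //; rewrite kn.
Qed.


Record inv (st : cfgT) : Prop := Inv {
 i_known : forall x, (x \in c_known st) = (c_ip st x != None);
 i_gnn : forall x g p, c_ip st x = Some (g, p) -> 0 <= g;
 i_ptr : forall x g t, c_ip st x = Some (g, Some t) ->
    [/\ t \in T, t.2 = x & exists g' p', c_ip st t.1.1 = Some (g', p') /\ g' + c t.1.2 <= g];
 i_reach : exists K, reach_info T sI (c_ih st) K /\ forall x, (x \in c_known st) = (x \in K);
 i_open : forall e, e \in c_open st ->
    [/\ e.1.1 \in c_known st, gval (c_ip st) e.1.1 <= e.1.2, (0 <= e.2)%E & (e.2 <= hs e.1.1)%E];
 i_goal : forall x, x \in SG -> x \notin c_closed st;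
 i_closed : forall x, x \in c_closed st -> x \in c_known st;
 i_sI : gval (c_ip st) sI <= 0 /\ c_ip st sI != None;
 i_K : forall x, x \in c_known st -> x \notin c_closed st -> (hs x < +oo)%E ->
    exists2 e, e \in c_open st & e.1.1 = x /\ e.1.2 = gval (c_ip st) x }.

Lemma gval_some (i : pinf) x g p : i x = Some (g, p) -> gval i x = g.
Proof. by rewrite /gval => ->. Qed.

Lemma defd_some (i : pinf) x : i x != None -> exists g p, i x = Some (g, p).
Proof. by case: (i x) => [[g p]|] // _; exists g, p. Qed.

Lemma gval_pupdate (i : pinf) t x : i x != None ->
  pupdate c i t x != None /\ gval (pupdate c i t) x <= gval i x.
Proof.
move=> /defd_some [g [p ix]]; have [g' [p' [E le]]] := pupdate_some t ix.
by rewrite /gval ix E; split.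
Qed.

Lemma gval_pupdate_other (i : pinf) t x : x != t.2 -> gval (pupdate c i t) x = gval i x.
Proof. by move=> nx; rewrite /gval pupdate_other. Qed.

Lemma hv_le (st : cfgT) t : inv st -> t \in T -> t.1.1 \in c_known st ->
  (h t.2 (update (c_ih st) t) <= hs t.2)%E /\
  exists K, reach_info T sI (update (c_ih st) t) K /\
    forall x, (x \in t.2 |: c_known st) = (x \in K).
Proof.
move=> I tT tk; have [K [rK kK]] := i_reach I.
have rK' : reach_info T sI (update (c_ih st) t) (t.2 :: K).
  by apply: reach_update => //; rewrite -kK.
split; first by apply: adm; exists (t.2 :: K).
by exists (t.2 :: K); split => // x; rewrite in_setU1 in_cons kK.
Qed.

Lemma inv_gen (st : cfgT) t (cl : {set S}) (op : seq (entry R S)) :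
  inv st -> t \in T -> t.1.1 \in c_known st ->
  let ip' := pupdate c (c_ip st) t in
  let ih' := update (c_ih st) t in
  let hv := h t.2 ih' in
  let g' := gval ip' t.2 in
  (forall x, x \in cl -> x \in c_closed st) ->
  (forall x, x != t.2 -> x \in c_closed st -> x \in cl) ->
  (forall e, e \in op -> e \in c_open st \/ e = (t.2, g', hv)) ->
  (forall e, e \in c_open st -> e \in op) ->
  (hv != +oo%E -> t.2 \notin cl -> (t.2, g', hv) \in op \/
     [/\ t.2 \in c_known st, g' = gval (c_ip st) t.2 & t.2 \notin c_closed st]) ->
  inv (Cfg ip' ih' (t.2 |: c_known st) cl op).
Proof.
move=> I tT tk ip' ih' hv g' G1 G1' G2 G2' G3.
have [hvle [K' [rK' kK']]] := hv_le I tT tk.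
have [g1 [p1 it1]] : exists g1 p1, c_ip st t.1.1 = Some (g1, p1).
  by apply: defd_some; rewrite -(i_known I).
have [gs [ps [ips2 les2]]] := pupdate_src it1.
split => /=.
- move=> x; case: (eqVneq x t.2) => [->|nx]; first by rewrite setU11 /ip' ips2.
  by rewrite in_setU1 (negbTE nx) /= /ip' pupdate_other // (i_known I).
- move=> x g p /pupdate_shape [/(i_gnn I) //|[_ [_ [g2 [p2 [i2 ->]]]]]].
  by rewrite addr_ge0 // (i_gnn I i2).
- move=> x g t' /pupdate_shape [ix|[-> [[->] [g2 [p2 [i2 ->]]]]]].
    have [t'T t'x [g3 [p3 [i3 le3]]]] := i_ptr I ix.
    have [g4 [p4 [E4 le4]]] := pupdate_some t i3; rewrite /ip' E4.
    split => //; exists g4, p4; split => //; apply: le_trans le3.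
    by rewrite lerD2r.
  have [g4 [p4 [E4 le4]]] := pupdate_some t i2; rewrite /ip' E4.
  by split => //; exists g4, p4; split => //; rewrite lerD2r.
- by exists K'.
- move=> e /G2 [eo|->] /=.
    have [ek ele e0 eh] := i_open I eo.
    have ed : c_ip st e.1.1 != None by rewrite -(i_known I).
    have [_ le] := gval_pupdate t ed.
    split => //; first by rewrite in_setU1 ek orbT.
    exact: le_trans le ele.
  by split => //; [rewrite setU11|exact: h_ge0].
- by move=> x /(i_goal I); apply: contra => /G1.
- by move=> x /G1 /(i_closed I) xk; rewrite in_setU1 xk orbT.
- have [sk s0] := i_sI I; have [nd le] := gval_pupdate t s0.
  by split => //; apply: le_trans le sk.
- move=> x; case: (eqVneq x t.2) => [-> _ ncl fin|nx].
    have hvf : hv != +oo%E by rewrite lt_eqF // (le_lt_trans hvle fin).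
    case: (G3 hvf ncl) => [eo|[kk ge ncl']]; first by exists (t.2, g', hv).
    have [e eo [e1 e2]] := i_K I kk ncl' fin.
    by exists e; [apply: G2'|split => //; rewrite e2 -ge].
  rewrite in_setU1 (negbTE nx) /= => xk ncl fin.
  have ncl' : x \notin c_closed st by apply: contra ncl; exact: G1'.
  have [e eo [e1 e2]] := i_K I xk ncl' fin.
  by exists e; [apply: G2'|split => //; rewrite e2 /ip' gval_pupdate_other].
Qed.


Lemma process_basic (st : cfgT) t :
  [/\ c_ip (process c sI h st t) = pupdate c (c_ip st) t,
      c_ih (process c sI h st t) = update (c_ih st) t,
      c_known (process c sI h st t) = t.2 |: c_known st &
      forall x, x \in c_closed (process c sI h st t) -> x \in c_closed st].
Proof.
by case: (process_spec st t) => [[-> _]|[-> _]|[-> _]] //=; split => // x /setD1P [].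
Qed.

Lemma inv_process (st : cfgT) t : inv st -> t \in T -> t.1.1 \in c_known st ->
  inv (process c sI h st t).
Proof.
move=> I tT tk.
have t2le : c_ip st t.2 != None -> gval (pupdate c (c_ip st) t) t.2 <= gval (c_ip st) t.2.
  by move=> nd; have [] := gval_pupdate t nd.
case: (process_spec st t) => [[-> H]|[-> [hv kn]]|[-> [hv kn lt]]].
- apply: inv_gen => //; first by move=> e ->; left.
  move=> hv ncl; case: H => [/eqP|[kn nlt]]; first by rewrite (negbTE hv).
  right; split => //; apply/eqP; rewrite eq_le t2le ?leNgt //.
  by rewrite -(i_known I).
- apply: inv_gen => //.
  + by move=> e; rewrite in_cons => /orP [/eqP ->|]; [right|left].
  + by move=> e eo; rewrite in_cons eo orbT.
  + by move=> _ _; left; rewrite mem_head.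
- apply: inv_gen => //.
  + by move=> x /setD1P [].
  + by move=> x nx xc; apply/setD1P.
  + by move=> e; rewrite in_cons => /orP [/eqP ->|]; [right|left].
  + by move=> e eo; rewrite in_cons eo orbT.
  + by move=> _ _; left; rewrite mem_head.
Qed.

Lemma process_closed_g (st : cfgT) t x : inv st -> t \in T -> t.1.1 \in c_known st ->
  x \in c_closed (process c sI h st t) -> (hs x < +oo)%E ->
  x \in c_closed st /\ gval (c_ip (process c sI h st t)) x = gval (c_ip st) x.
Proof.
move=> I tT tk; have [hvle _] := hv_le I tT tk.
case: (eqVneq x t.2) => [->|nx]; last first.
  have [-> _ _ cl] := process_basic st t.
  by move=> /cl xc _; rewrite gval_pupdate_other.
case: (process_spec st t) => [[-> H]|[-> [hv kn]]|[-> [hv kn lt]]] /= xc fin.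
- split => //; case: H => [hoo|[kn nlt]].
    by move: (le_lt_trans hvle fin); rewrite hoo ltxx.
  rewrite -leNgt in nlt; apply/eqP; rewrite /= eq_le nlt andbT.
  by have [] := gval_pupdate t (_ : c_ip st t.2 != None); rewrite -?(i_known I).
- by move: kn; rewrite (i_closed I xc).
- by move: xc; rewrite setD11.
Qed.


Lemma chain_cat s (p q : seq (S * L * S)) s' :
  chain s (p ++ q) s' -> exists m, chain s p m /\ chain m q s'.
Proof.
elim: p s => [|t p IH] s /=; first by move=> H; exists s.
by move=> [e /IH [m [H1 H2]]]; exists m.
Qed.

Lemma gp_split s p1 t p2 : goal_path T SG s (p1 ++ t :: p2) ->
  t \in T /\ goal_path T SG t.1.1 (t :: p2).
Proof.
move=> [s' [sg [ch inT]]]; have [m [_ ch2]] := chain_cat ch.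
split; first by apply: inT; rewrite mem_cat mem_head orbT.
exists s'; split => //; split; first by case: ch2.
by move=> t' tin; apply: inT; rewrite mem_cat tin orbT.
Qed.

Definition Jinv (p0 : seq (S * L * S)) (st : cfgT) :=
  forall p1 t p2, p0 = p1 ++ t :: p2 -> t.1.1 \in c_closed st ->
    gval (c_ip st) t.1.1 <= cost c p1 ->
    t.2 \in c_known st /\ gval (c_ip st) t.2 <= cost c p1 + c t.1.2.

Lemma inv_foldl s ts : forall st : cfgT, inv st -> s \in c_known st ->
  (forall t, t \in ts -> t \in T /\ t.1.1 = s) -> inv (foldl (process c sI h) st ts).
Proof.
elim: ts => [|t ts IH] st I sk H //=.
have [tT ts1] := H t (mem_head _ _).
apply: IH; first by apply: inv_process => //; rewrite ts1.
  by have [_ _ -> _] := process_basic st t; rewrite in_setU1 sk orbT.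
by move=> t' t'in; apply: H; rewrite in_cons t'in orbT.
Qed.

Lemma Jr_foldl p0 s : goal_path T SG sI p0 -> forall ts (st : cfgT), inv st ->
  s \in c_known st -> (forall t, t \in ts -> t \in T /\ t.1.1 = s) ->
  (forall p1 t p2, p0 = p1 ++ t :: p2 -> t.1.1 \in c_closed st ->
    gval (c_ip st) t.1.1 <= cost c p1 -> t \in ts \/
    (t.2 \in c_known st /\ gval (c_ip st) t.2 <= cost c p1 + c t.1.2)) ->
  Jinv p0 (foldl (process c sI h) st ts).
Proof.
move=> sol; elim => [|t0 ts IH] st I sk H J /=.
  by move=> p1 t p2 E cl le; case: (J p1 t p2 E cl le).
have [t0T t0s] := H t0 (mem_head _ _).
have t0k : t0.1.1 \in c_known st by rewrite t0s.
have [Eip _ Ekn _] := process_basic st t0.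
apply: IH; first by apply: inv_process.
- by rewrite Ekn in_setU1 sk orbT.
- by move=> t' t'in; apply: H; rewrite in_cons t'in orbT.
move=> p1 t p2 E cl le.
have := sol; rewrite E => /gp_split [_ gpt].
have [cl0 geq] := process_closed_g I t0T t0k cl (hstar_fin gpt).
rewrite geq in le.
case: (J p1 t p2 E cl0 le) => [|[tk tle]].
  rewrite in_cons => /orP [/eqP Et|]; last by left.
  subst t.
  right; rewrite Ekn Eip setU11; split => //.
  have [g1 [p1' it1]] : exists g p, c_ip st t0.1.1 = Some (g, p).
    by apply: defd_some; rewrite -(i_known I).
  have [g' [p' [E' le']]] := pupdate_src it1.
  rewrite (gval_some E'); apply: (le_trans le'); rewrite lerD2r.
  by move: le; rewrite (gval_some it1).
right; rewrite Ekn Eip in_setU1 tk orbT; split => //.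
have ed : c_ip st t.2 != None by rewrite -(i_known I).
have [_ l2] := gval_pupdate t0 ed.
exact: le_trans l2 tle.
Qed.


Lemma succ_mem s t : (t \in succ_transitions T s) = (t \in T) && (t.1.1 == s).
Proof. by rewrite /succ_transitions mem_enum inE. Qed.

Lemma step_pres (st : cfgT) o : step c T sI SG h reeval st o ->
  forall st', o = Cont st' -> inv st ->
  inv st' /\ (forall p0, goal_path T SG sI p0 -> Jinv p0 st -> Jinv p0 st').
Proof.
case => {st o}.
- by [].
- move=> st e eo emin ecl st' [<-] I; split; last by move=> p0 _ J.
  split => //=; try exact: (i_known I); try exact: (i_gnn I); try exact: (i_ptr I);
    try exact: (i_reach I); try exact: (i_goal I); try exact: (i_closed I);
    try exact: (i_sI I).
    by move=> e' /mem_rem; exact: (i_open I).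
  move=> x xk ncl fin; have [e' e'o [e1 e2]] := i_K I xk ncl fin.
  exists e' => //; apply: rem_mem => //; apply/eqP => Ee.
  by move: ncl; rewrite -e1 Ee ecl.
- move=> st e eo emin encl s ip' ih' rv lt st' [<-] I.
  have [ek _ _ _] := i_open I eo.
  have [K [rK kK]] := i_reach I.
  have rK' : reach_info T sI ih' K by apply: reach_refine; rewrite -?kK.
  have hle : (h s ih' <= hs s)%E by apply: adm; exists K.
  split; last by move=> p0 _ J.
  split => //=; try exact: (i_known I); try exact: (i_gnn I); try exact: (i_ptr I);
    try exact: (i_goal I); try exact: (i_closed I); try exact: (i_sI I).
  + by exists K.
  + move=> e'; case: ifP => _; last by move/mem_rem; exact: (i_open I).
    rewrite in_cons => /orP [/eqP ->|/mem_rem]; last exact: (i_open I).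
    by split => //=.
  + move=> x xk ncl fin; have [e' e'o [e1 e2]] := i_K I xk ncl fin.
    case: (eqVneq e' e) => [Ee|ne].
      have fs : (h s ih' < +oo)%E by apply: le_lt_trans hle _; rewrite /s -Ee e1.
      rewrite fs; exists (s, gval ip' s, h s ih'); first by rewrite mem_head.
      by rewrite /= /s -Ee e1.
    exists e'; last by [].
    by case: ifP => _; rewrite ?in_cons (rem_mem ne e'o) ?orbT.
- by [].
- move=> st e ts eo emin encl s ip' ih' nre nsg pts st' [<-] I.
  have [ek _ _ _] := i_open I eo.
  have [K [rK kK]] := i_reach I.
  have rK' : reach_info T sI ih' K by apply: reach_refine; rewrite -?kK.
  set st0 := Cfg ip' ih' (c_known st) (s |: c_closed st) (rem e (c_open st)).
  have I0 : inv st0.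
    split => //=; try exact: (i_known I); try exact: (i_gnn I); try exact: (i_ptr I);
      try exact: (i_sI I).
    + by exists K.
    + by move=> e' /mem_rem; exact: (i_open I).
    + move=> x xg; rewrite in_setU1 negb_or (i_goal I xg) andbT.
      by apply: contraNneq nsg => <-.
    + by move=> x; rewrite in_setU1 => /orP [/eqP ->|/(i_closed I)].
    + move=> x xk; rewrite in_setU1 negb_or => /andP [nxs ncl] fin.
      have [e' e'o [e1 e2]] := i_K I xk ncl fin.
      exists e' => //; apply: rem_mem => //; apply/eqP => Ee.
      by move: nxs; rewrite -e1 Ee eqxx.
  have tsH : forall t, t \in ts -> t \in T /\ t.1.1 = s.
    by move=> t; rewrite (perm_mem pts) succ_mem => /andP [-> /eqP].
  split; first exact: (inv_foldl I0 ek tsH).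
  move=> p0 sol J; apply: (Jr_foldl sol I0 ek tsH).
  move=> p1 t p2 E; rewrite /= in_setU1 => /orP [/eqP ts1|cl] le.
    left; rewrite (perm_mem pts) succ_mem ts1 eqxx andbT.
    by have := sol; rewrite E => /gp_split [].
  by right; exact: (J p1 t p2 E cl le).
Qed.


Lemma inv_init : inv (init_cfg c sI h).
Proof.
have p0E x : @pinfo0 R S L sI x = if x == sI then Some (0 : R, None) else None by [].
have reach0' : reach_info T sI (iota0 sh) [:: sI] by exact: reach0.
have hle : (h sI (iota0 sh) <= hs sI)%E by apply: adm; exists [:: sI].
split => /=.
- by move=> x; rewrite finset.in_set1 p0E; case: eqP.
- by move=> x g p; rewrite p0E; case: eqP => // _ [<-].
- by move=> x g t; rewrite p0E; case: eqP.
- by exists [:: sI]; split => // x; rewrite finset.in_set1 mem_seq1.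
- move=> e; case: ifP => // _; rewrite mem_seq1 => /eqP -> /=.
  by split => //; rewrite finset.in_set1.
- by move=> x _; rewrite finset.in_set0.
- by move=> x; rewrite finset.in_set0.
- by rewrite /gval p0E eqxx.
- move=> x; rewrite finset.in_set1 => /eqP -> _ fin.
  have -> : (h sI (iota0 sh) < +oo)%E by apply: le_lt_trans hle fin.
  by exists (sI, gval (@pinfo0 R S L sI) sI, h sI (iota0 sh)); rewrite ?mem_seq1.
Qed.

Lemma J_init p0 : Jinv p0 (init_cfg c sI h).
Proof. by move=> p1 t p2 _; rewrite /= finset.in_set0. Qed.

Lemma find_open (st : cfgT) p0 : inv st -> Jinv p0 st ->
  forall rest p1 u, p0 = p1 ++ rest -> goal_path T SG u rest ->
  u \in c_known st -> gval (c_ip st) u <= cost c p1 ->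
  exists x q1 q2, [/\ p0 = q1 ++ q2, goal_path T SG x q2, x \in c_known st,
    x \notin c_closed st & gval (c_ip st) x <= cost c q1].
Proof.
move=> I J; elim => [|t r IH] p1 u E gp uk ule.
  exists u, p1, [::]; split => //; apply: (i_goal I).
  by case: gp => s' [sg [/= -> _]].
case: (boolP (u \in c_closed st)) => ucl; last by exists u, p1, (t :: r).
have [s' [sg [[tu ch] inT]]] := gp.
have E' : p0 = p1 ++ t :: r by [].
rewrite -tu in ucl ule.
have [tk tle] := J p1 t r E' ucl ule.
apply: (IH (rcons p1 t) t.2) => //.
- by rewrite cat_rcons.
- by exists s'; split => //; split => // t' t'in; apply: inT; rewrite in_cons t'in orbT.
- by rewrite cost_rcons.
Qed.

Lemma chain_cost (st : cfgT) : inv st -> forall p u gu pu s,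
  chain u p s -> (forall t, t \in p -> exists g, c_ip st t.2 = Some (g, Some t)) ->
  c_ip st u = Some (gu, pu) -> gu + cost c p <= gval (c_ip st) s.
Proof.
move=> I; elim => [|t p IH] u gu pu s /=.
  by move=> <- _ iu; rewrite /cost big_nil addr0 (gval_some iu).
move=> [tu ch] H iu.
have [g tg] := H t (mem_head _ _).
have [_ _ [g' [p' [i1 le]]]] := i_ptr I tg.
rewrite tu iu in i1; case: i1 => eg _; rewrite -eg in le.
have H' : forall t', t' \in p -> exists g, c_ip st t'.2 = Some (g, Some t').
  by move=> t' t'in; apply: H; rewrite in_cons t'in orbT.
have := IH t.2 g (Some t) s ch H' tg.
rewrite cost_cons addrA; apply: le_trans; by rewrite lerD2r.
Qed.

Lemma step_ret (st : cfgT) pi : step c T sI SG h reeval st (@Ret R S L sh pi) -> inv st ->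
  (forall p0, goal_path T SG sI p0 -> Jinv p0 st) ->
  is_solution T sI SG pi /\ (cost c pi)%:E = hs sI.
Proof.
move Eo : (@Ret R S L sh pi) => o H; case: H Eo => //.
move=> {}st e pi' eo emin encl s ip' ih' nre sg [ch [ptrs _]] [Epi] I J; subst pi.
have ptrs' : forall t, t \in pi' -> exists g, c_ip st t.2 = Some (g, Some t) by [].
have sol : is_solution T sI SG pi'.
  exists s; split => //; split => // t /ptrs' [g tg].
  by have [] := i_ptr I tg.
split => //.
have [g0 [p0 iI]] : exists g p, c_ip st sI = Some (g, p) by apply: defd_some; case: (i_sI I).
have cle : cost c pi' <= gval (c_ip st) s.
  apply: le_trans (chain_cost I ch ptrs' iI).
  by rewrite lerDr (i_gnn I iI).
have [ek ele e0 eh] := i_open I eo.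
have ckey : ((cost c pi')%:E <= key e)%E.
  apply: (@le_trans _ _ (e.1.2)%:E); first by rewrite lee_fin (le_trans cle ele).
  by rewrite /key; apply: leeDl.
apply/eqP; rewrite eq_le; apply/andP; split; last exact: hstar_le.
apply: le_hstar => p gp.
apply: (le_trans ckey).
have sIk : sI \in c_known st by rewrite (i_known I); case: (i_sI I).
have c0 : gval (c_ip st) sI <= cost c ([::] : seq (S * L * S)) by rewrite /cost big_nil; case: (i_sI I).
have [x [q1 [q2 [Eq gq xk xcl xle]]]] :=
  find_open I (J p gp) (erefl ([::] ++ p)) gp sIk c0.
have hsx := hstar_le gq.
have [e' e'o [e1 e2]] := i_K I xk xcl (hstar_fin gq).
apply: (le_trans (emin e' e'o)).
have [_ _ _ e'h] := i_open I e'o.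
rewrite /key e2 Eq cost_cat EFinD; apply: leeD; first by rewrite lee_fin.
by apply: (le_trans e'h); rewrite e1.
Qed.

Theorem main_thm pi : dynAstar_returns c T sI SG h reeval pi ->
  is_solution T sI SG pi /\ (cost c pi)%:E = hs sI.
Proof.
rewrite /dynAstar_returns => HR.
have HX : inv (init_cfg c sI h) /\ forall p0, goal_path T SG sI p0 -> Jinv p0 (init_cfg c sI h).
  by split; [exact: inv_init|move=> p0 _; exact: J_init].
move: HR HX; elim => [st pi' H [I J]|st st' pi' H _ IH [I J]]; first exact: step_ret H I J.
have [I' J'] := step_pres H (erefl _) I.
by apply: IH; split => // p0 gp; apply: J' => //; apply: J.
Qed.

End Proofs.

Theorem theorem5 (R : realType) (S L : finType) (c : L -> R)
  (T : {set S * L * S}) (sI : S) (SG : {set S}) (sh : source S L)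
  (h : S -> info sh -> \bar R) (reeval : bool) (pi : seq (S * L * S)) :
  (forall l, 0 <= c l) ->
  (forall s i, (0 <= h s i)%E) ->
  dyn_admissible c T sI SG h ->
  dynAstar_returns c T sI SG h reeval pi ->
  is_solution T sI SG pi /\ (cost c pi)%:E = hstar c T SG sI.
Proof.
move=> c0 h0 adm H; exact: (main_thm c0 h0 adm H).
Qed.
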